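(* Let $G$ be a profinite group. Then the following are equivalent: (i) every closed subgroup of $G$ has a closed permutable complement in $G$; (ii) every closed subgroup of $G$ has a permutable complement in $G$; (iii) every open subgroup of $G$ has a permutable complement in $G$; (iv) every open subgroup of $G$ has a closed permutable complement in $G$; (v) if $\mathcal{N}$ is a fundamental system of neighborhoods of the identity consisting of open normal subgroups of $G$, then $G/N$ is a $C$-group for every $N\in\mathcal{N}$; (vi) $G$ is an inverse limit of finite $C$-groups.
   Context: For a group $G$ and a subgroup $H\le G$, a permutable complement of $H$ in $G$ is a subgroup $K\le G$ with $G=HK$ and $H\cap K=1$. A group $G$ is a $C$-group if every subgroup of $G$ has a permutable complement in $G$. *)

(* Defs.v *)
From HB Require Import structures.
From mathcomp Require Import all_boot all_order all_fingroup.
From mathcomp Require Import classical_sets cardinality topology.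

Set Implicit Arguments.
Unset Strict Implicit.
Unset Printing Implicit Defensive.

Local Open Scope classical_set_scope.

#[short(type="topGroupType")]
HB.structure Definition TopGroup := {G of monoid.Group G & Topological G}.

Section TopGroupDefs.
Variable G : topGroupType.

Definition is_subgroup (H : set G) : Prop :=
  [/\ H 1%g,
      (forall x y, H x -> H y -> H (x * y)%g) &
      (forall x, H x -> H (x^-1)%g)].

Definition is_normal_subgroup (N : set G) : Prop :=
  is_subgroup N /\ (forall g x, N x -> N (g^-1 * x * g)%g).

Definition closed_subgroup (H : set G) := is_subgroup H /\ closed H.
Definition open_subgroup (H : set G) := is_subgroup H /\ open H.

Definition setmul (H K : set G) : set G := [set (x * y)%g | x in H & y in K].

Definition perm_complement (H K : set G) : Prop :=
  [/\ is_subgroup K, setmul H K = setT & H `&` K = [set 1%g]].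

Definition profinite : Prop :=
  [/\ continuous (fun p : G * G => (p.1 * p.2)%g),
      continuous (fun x : G => (x^-1)%g),
      compact [set: G],
      hausdorff_space G &
      totally_disconnected [set: G]].

Definition fundamental_system_open_normal (NN : set (set G)) : Prop :=
  (forall N, NN N -> open N /\ is_normal_subgroup N) /\
  (forall U, nbhs 1%g U -> exists2 N, NN N & N `<=` U).

(* f : G -> Q is (a realisation of) the quotient map G -> G/N, i.e. a
   surjective homomorphism with kernel N; then Q is (isomorphic to) G/N *)
Definition is_quotient_map (Q : finGroupType) (f : G -> Q) (N : set G) : Prop :=
  [/\ (forall x y, f (x * y)%g = (f x * f y)%g),
      (forall q, exists x, f x = q) &
      (forall x, f x = 1%g <-> N x)].
End TopGroupDefs.

Definition C_group (Q : finGroupType) : Prop :=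
  forall H : {group Q}, exists K : {group Q},
    (H * K)%g = [set: Q]%SET /\ (H :&: K)%g = 1%g.

Definition quotient_is_C_group (G : topGroupType) (N : set G) : Prop :=
  exists (Q : finGroupType) (f : G -> Q), is_quotient_map f N /\ C_group Q.

(* G is (topologically isomorphic to) the inverse limit of an inverse system
   (Q_i, phi_ij) of finite C-groups over a directed poset (I, le), with finite
   groups carrying the discrete topology. The data pi_i : G -> Q_i are the
   projections; the conditions say that g |-> (pi_i g)_i is a group isomorphism
   of G onto the group of compatible threads which is a homeomorphism onto it
   (subspace topology of the product of discrete spaces). *)
Definition inverse_limit_of_finite_C_groups (G : topGroupType) : Prop :=
  exists (I : Type) (le : I -> I -> Prop) (Q : I -> finGroupType)
         (phi : forall i j, Q i -> Q j) (pi : forall i, G -> Q i),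
  [/\
      [/\ inhabited I, (forall i, le i i),
          (forall i j k, le i j -> le j k -> le i k),
          (forall i j, le i j -> le j i -> i = j) &
          (forall i j, exists k, le i k /\ le j k)],
      (forall i, C_group (Q i)),
      [/\ (forall i j, le j i -> forall x y,
             phi i j (x * y)%g = (phi i j x * phi i j y)%g),
          (forall i x, phi i i x = x) &
          (forall i j k, le k j -> le j i -> forall x,
             phi i k x = phi j k (phi i j x))],
      [/\ (forall i x y, pi i (x * y)%g = (pi i x * pi i y)%g),
          (forall i q, open (pi i @^-1` [set q])) &
          (forall i j, le j i -> forall g, phi i j (pi i g) = pi j g)] &
      ((forall x : forall i, Q i,
          (forall i j, le j i -> phi i j (x i) = x j) ->
          exists! g, forall i, pi i g = x i) /\
      (* (topology of G = subspace topology of the product) *)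
      (forall U : set G, open U -> forall g, U g ->
          exists F : set I, finite_set F /\
            [set h | forall i, F i -> pi i h = pi i g] `<=` U))].

(* Main.v *)
Require Import Defs.
From HB Require Import structures.
From mathcomp Require Import all_boot all_order all_fingroup.
From mathcomp Require Import boolp classical_sets cardinality topology.
Set Implicit Arguments.
Unset Strict Implicit.
Unset Printing Implicit Defensive.
Local Open Scope classical_set_scope.
Local Open Scope group_scope.

Lemma compact_inter (T : topologicalType) (I : Type) (D : set I) (f : I -> set T) :
  compact [set: T] -> D !=set0 -> (forall i, D i -> closed (f i)) ->
  (forall i, D i -> f i !=set0) ->
  (forall i j, D i -> D j -> exists2 k, D k & f k `<=` f i `&` f j) ->
  exists p, forall i, D i -> f i p.
Proof.
move=> cT [i0 Di0] clf nef dir.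
pose F := filter_from D f.
have FF : Filter F by apply: filter_from_filter => //; exists i0.
have PF : ProperFilter F by apply: filter_from_proper.
have [p [_ clp]] := cT F PF (filterT).
exists p => i Di; apply: (clf i Di) => B nB.
by apply: clp => //; exists i.
Qed.

Lemma normal_sep (T : topologicalType) (A B : set T) :
  hausdorff_space T -> compact [set: T] -> closed A -> closed B ->
  A `&` B = set0 ->
  exists U V, [/\ open U, open V, A `<=` U, B `<=` V & U `&` V = set0].
Proof.
move=> hT cT clA clB AB0.
have nT := compact_normal hT cT.
have snB : set_nbhs A (~` B).
  apply/set_nbhsP; exists (~` B); split => //; first exact: closed_openC.
  by move=> a Aa Ba; have : (A `&` B) a by []; rewrite AB0.
have [W snW clW] := nT A clA _ snB.
have [U [oU AU UW]] := (set_nbhsP _ _).1 snW.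
exists U, (~` closure W); split => //.
- exact/closed_openC/closed_closure.
- by move=> b Bb /clW.
- apply/seteqP; split => // u [/UW Wu]; apply; exact: subset_closure.
Qed.

Lemma td_zero_dim (T : topologicalType) : hausdorff_space T ->
  compact [set: T] -> totally_disconnected [set: T] -> zero_dimensional T.
Proof.
move=> hT cT tdT x y xy.
pose D := [set C : set T | clopen C /\ C x].
pose Q := \bigcap_(C in D) C.
have Qx : Q x by move=> C [].
have clQ : closed Q by apply: closed_bigI => C [[]].
have key : forall U V : set T, open U -> open V -> U `&` V = set0 ->
    Q `<=` U `|` V -> U x -> Q `<=` U.
  move=> U V oU oV UV0 QUV Ux.
  have [C [cC Cx] CUV] : exists2 C, D C & C `<=` U `|` V.
    apply: contrapT => nex.
    have [||||p Hp] := @compact_inter T _ D (fun C => C `&` ~` (U `|` V)) cT.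
    - by exists setT; split => //; exact: clopenT.
    - move=> C [[_ clC] _]; apply: closedI => //.
      exact/open_closedC/openU.
    - move=> C DC; apply: contrapT => /set0P/negP; rewrite negbK => /eqP E.
      apply: nex; exists C => // z Cz; apply: contrapT => nz.
      by have : (C `&` ~` (U `|` V)) z by []; rewrite E.
    - move=> C1 C2 [cC1 C1x] [cC2 C2x]; exists (C1 `&` C2).
        by split; [exact: clopenI|].
      by move=> z [[C1z C2z] nz].
    have Qp : Q p by move=> C DC; have [] := Hp C DC.
    by have [_ np] := Hp setT (conj clopenT I); exact: np (QUV _ Qp).
  have cCU : clopen (C `&` U).
    split; first by apply: openI => //; case: cC.
    have -> : C `&` U = C `&` ~` V.
      apply/seteqP; split => z [Cz Hz]; split => //.
        by move=> Vz; have : (U `&` V) z by []; rewrite UV0.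
      by case: (CUV z Cz).
    by apply: closedI; [case: cC| exact: open_closedC].
  by move=> q Qq; have [] := Qq (C `&` U) (conj cCU (conj Cx Ux)).
have cQ : connected Q.
  move=> B [b Bb] [O oO BO] [F clF BF].
  have clB : closed B by rewrite BF; exact: closedI.
  have clA : closed (Q `&` ~` O) by apply: closedI => //; exact: open_closedC.
  have AB0 : (Q `&` ~` O) `&` B = set0.
    apply/seteqP; split => // z [[_ nO]]; rewrite BO => -[].
    by move=> _ /nO.
  have [UA [UB [oUA oUB AUA BUB UAB0]]] := normal_sep hT cT clA clB AB0.
  have QU : Q `<=` UA `|` UB.
    move=> q Qq; have [Oq|nOq] := pselect (O q).
      by right; apply: BUB; rewrite BO.
    by left; apply: AUA.
  have [Bx|nBx] := pselect (B x).
  - have QUB : Q `<=` UB.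
      apply: (key UB UA) => //; first by rewrite setIC.
        by rewrite setUC.
      exact: BUB.
    apply/seteqP; split; first by rewrite BO => z [].
    move=> q Qq; rewrite BO; split => //; apply: contrapT => nOq.
    have : (UA `&` UB) q by split; [exact: AUA| exact: QUB].
    by rewrite UAB0.
  - have Ax : (Q `&` ~` O) x.
      split => // Ox; apply: nBx; rewrite BO; split => //.
    have QUA : Q `<=` UA by apply: (key UA UB) => //; exact: AUA.
    have Qb : Q b by move: Bb; rewrite BO => -[].
    have : (UA `&` UB) b by split; [exact: QUA| exact: BUB].
    by rewrite UAB0.
have Qsub : Q `<=` [set x].
  rewrite -(tdT x I) => q Qq; exists Q => //.
apply: contrapT => nC.
have Qy : Q y.
  move=> C [cC Cx]; apply: contrapT => nCy; apply: nC; exists C; split => //.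
by move: xy; rewrite (Qsub y Qy) eqxx.
Qed.

Section TG.
Variable G : topGroupType.
Hypothesis hmul : continuous (fun p : G * G => p.1 * p.2).
Hypothesis hinv : continuous (fun x : G => x^-1).

Lemma setmulP (A B : set G) z :
  setmul A B z <-> exists x y, [/\ A x, B y & z = x * y].
Proof.
split; first by case=> x Ax [y By <-]; exists x, y.
by case=> x [y [Ax By ->]]; exists x => //; exists y.
Qed.

Lemma mul_near (a b : G) (U : set G) : nbhs (a * b) U ->
  exists V W, [/\ nbhs a V, nbhs b W & forall x y, V x -> W y -> U (x * y)].
Proof.
move=> hU; have := @hmul (a, b) U hU.
case=> [[V W] [/= hV hW] sub]; exists V, W; split => // x y Vx Wy.
exact: (sub (x, y)).
Qed.

Lemma nbhs_lmul (g x : G) (U : set G) : nbhs (g * x) U ->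
  nbhs x [set y | U (g * y)].
Proof.
case/mul_near=> V [W [hV hW sub]]; apply: filterS hW => y Wy.
exact: sub (nbhs_singleton hV) Wy.
Qed.

Lemma nbhs_rmul (g x : G) (U : set G) : nbhs (x * g) U ->
  nbhs x [set y | U (y * g)].
Proof.
case/mul_near=> V [W [hV hW sub]]; apply: filterS hV => y Vy.
exact: sub Vy (nbhs_singleton hW).
Qed.

Lemma nbhs_inv (x : G) (U : set G) : nbhs x^-1 U -> nbhs x [set y | U y^-1].
Proof. by move=> hU; exact: (@hinv x U hU). Qed.

Lemma open_lmul (g : G) (U : set G) : open U -> open [set y | U (g * y)].
Proof.
rewrite !openE => oU y Uy; rewrite /interior.
exact: nbhs_lmul (oU _ Uy).
Qed.

Lemma open_rmul (g : G) (U : set G) : open U -> open [set y | U (y * g)].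
Proof.
rewrite !openE => oU y Uy; rewrite /interior.
exact: nbhs_rmul (oU _ Uy).
Qed.

Lemma closed_lmul (g : G) (U : set G) : closed U -> closed [set y | U (g * y)].
Proof.
rewrite -!openC => oU.
by have := open_lmul g oU.
Qed.

Lemma closed_rmul (g : G) (U : set G) : closed U -> closed [set y | U (y * g)].
Proof.
rewrite -!openC => oU.
by have := open_rmul g oU.
Qed.

Lemma subgroup_open_closed (H : set G) : is_subgroup H -> open H -> closed H.
Proof.
case=> H1 HM HV oH; rewrite -openC openE => y nHy.
rewrite /interior.
have : nbhs (y^-1 * y) H by rewrite mulVg; apply: open_nbhs_nbhs.
move/nbhs_lmul; apply: filterS => z /= Hz Hz'; apply: nHy.
have -> : y = z * (y^-1 * z)^-1 by rewrite invgM invgK mulgA mulgV mul1g.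
by apply: HM => //; exact: HV.
Qed.

Lemma subgroup_nbhs_open (H : set G) : is_subgroup H -> nbhs 1 H -> open H.
Proof.
case=> H1 HM HV n1H; rewrite openE => h Hh; rewrite /interior.
have : nbhs (h^-1 * h) H by rewrite mulVg.
move/nbhs_lmul; apply: filterS => y /= Hy.
have -> : y = h * (h^-1 * y) by rewrite mulgA mulgV mul1g.
exact: HM.
Qed.


Hypothesis hcpt : compact [set: G].
Hypothesis hhaus : hausdorff_space G.
Hypothesis htd : totally_disconnected [set: G].

Lemma clopen_base (U : set G) : nbhs 1 U ->
  exists C, [/\ clopen C, C 1 & C `<=` U].
Proof.
move=> nU; have zd := td_zero_dim hhaus hcpt htd.
have := @zero_dimensional_cvg G 1 hhaus zd hcpt U nU.
by case=> C [C1 cC] CU; exists C.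
Qed.

Lemma clopen_subgroup (C : set G) : clopen C -> C 1 ->
  exists S, [/\ is_subgroup S, open S & S `<=` C].
Proof.
case=> oC clC C1.
pose S := [set g | forall c, C c -> C (c * g) /\ C (c * g^-1)].
have sgS : is_subgroup S.
  split.
  - by move=> c Cc; rewrite invg1 mulg1.
  - move=> g h Sg Sh c Cc; split.
      by rewrite mulgA; apply: (Sh _ (Sg _ Cc).1).1.
    by rewrite invgM mulgA; apply: (Sg _ (Sh _ Cc).2).2.
  - by move=> g Sg c Cc; rewrite invgK; split; [exact: (Sg c Cc).2 | exact: (Sg c Cc).1].
exists S; split => //; last by move=> g /(_ 1 C1) []; rewrite mul1g.
apply: subgroup_nbhs_open => //.
have cC : compact C := subclosed_compact clC hcpt (@subsetT _ C).
apply: ((compact_near_coveringP C).1 cC G (nbhs (1:G))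
   (fun g c => C (c * g) /\ C (c * g^-1))) => c Cc.
have nC : nbhs c C by rewrite openE in oC; exact: oC.
have : nbhs (c * 1) C by rewrite mulg1.
case/mul_near => V [W [nV nW VW]].
have : nbhs (c * 1^-1) C by rewrite invg1 mulg1.
case/mul_near => V2 [W2 [nV2 nW2 VW2]].
exists (V `&` V2, W `&` [set y | W2 y^-1]).
  split; first exact: filterI.
  by apply: filterI => //; exact: nbhs_inv.
by case=> a b [[Va V2a] [Wb W2b]] /=; split; [exact: VW | exact: VW2].
Qed.

Lemma open_subgroup_normal (S : set G) : is_subgroup S -> open S ->
  exists N, [/\ open N, is_normal_subgroup N & N `<=` S].
Proof.
case=> S1 SM SV oS.
pose N := [set g | forall x, S (x^-1 * g * x)].
have sgN : is_subgroup N.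
  split.
  - by move=> x; rewrite mulg1 mulVg.
  - move=> g h Ng Nh x.
    have -> : x^-1 * (g * h) * x = (x^-1 * g * x) * (x^-1 * h * x).
      by rewrite !mulgA mulgK.
    exact: SM.
  - move=> g Ng x.
    have -> : x^-1 * g^-1 * x = (x^-1 * g * x)^-1 by rewrite !invgM invgK !mulgA.
    exact: SV.
exists N; split => //.
- apply: subgroup_nbhs_open => //.
  suff : \forall g \near (nbhs (1:G)), [set: G] `<=` (fun x => S (x^-1 * g * x)).
    by apply: filterS => g Hg x; exact: Hg.
  apply: ((compact_near_coveringP setT).1 hcpt G (nbhs (1:G))
    (fun g x => S (x^-1 * g * x))) => x0 _.
  have : nbhs ((x0^-1 * 1) * x0) S.
    by rewrite mulg1 mulVg; apply: open_nbhs_nbhs.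
  case/mul_near => V1 [W1 [nV1 nW1 VW1]].
  case/mul_near: nV1 => V2 [W2 [nV2 nW2 VW2]].
  exists (W1 `&` [set x | V2 x^-1], W2).
    by split => //; apply: filterI => //; exact: nbhs_inv.
  by case=> a b [[W1a V2a] W2b] /=; apply: VW1 => //; exact: VW2.
- split => // g x Nx y.
  have -> : y^-1 * (g^-1 * x * g) * y = (g * y)^-1 * x * (g * y).
    by rewrite invgM !mulgA.
  exact: Nx.
- by move=> g /(_ 1); rewrite invg1 mul1g mulg1.
Qed.

Lemma open_normal_base (U : set G) : nbhs 1 U ->
  exists N, [/\ open N, is_normal_subgroup N & N `<=` U].
Proof.
case/clopen_base => C [cC C1 CU].
have [S [sgS oS SC]] := clopen_subgroup cC C1.
have [N [oN nN NS]] := open_subgroup_normal sgS oS.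
by exists N; split => // x /NS /SC /CU.
Qed.

Lemma separate (x : G) : x <> 1 ->
  exists N, [/\ open N, is_normal_subgroup N & ~ N x].
Proof.
move=> x1.
have clx : closed [set x] by apply: accessible_closed_set1; exact: hausdorff_accessible.
have : nbhs 1 (~` [set x]).
  by apply: open_nbhs_nbhs; split; [exact: closed_openC | move=> /esym].
case/open_normal_base => N [oN nN NU]; exists N; split => // /NU; exact.
Qed.

Lemma subgroupI (A B : set G) : is_subgroup A -> is_subgroup B ->
  is_subgroup (A `&` B).
Proof.
case=> A1 AM AV [B1 BM BV]; split => //.
- by move=> x y [Ax Bx] [Ay By]; split; [exact: AM | exact: BM].
- by move=> x [Ax Bx]; split; [exact: AV | exact: BV].
Qed.

Definition Rprop := forall (A : set G) (x : G), is_subgroup A -> A x -> x <> 1 ->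
  exists L : set G, [/\ is_subgroup L, closed L, setmul A L = setT & ~ L x].

Lemma R_to_i : Rprop -> forall H : set G, closed_subgroup H ->
  exists K : set G, closed K /\ perm_complement H K.
Proof.
move=> hR H [[H1 HM HV] clH].
pose T := {K : set G | [/\ is_subgroup K, closed K & setmul H K = setT]}.
pose R (a b : T) := `[< sval b `<=` sval a >].
have [||||t tmax] := @Zorn T R.
- by move=> a; apply/asboolP.
- by move=> a b c /asboolP ab /asboolP bc; apply/asboolP; exact: subset_trans bc ab.
- move=> [a pa] [b pb] /asboolP ab /asboolP ba; apply: eq_exist; exact/seteqP.
- move=> A totA.
  have [[a0 Aa0]|A0] := pselect (exists a, A a); last first.
    have pT : [/\ is_subgroup [set: G], closed [set: G] & setmul H [set: G] = setT].
      split => //; apply/seteqP; split => // g _.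
      by apply/setmulP; exists 1, g; rewrite mul1g.
    by exists (exist _ setT pT) => a Aa; exfalso; apply: A0; exists a.
  pose K := \bigcap_(a in A) sval a.
  have pK : [/\ is_subgroup K, closed K & setmul H K = setT].
    split.
    + split.
      * by move=> a Aa; case: (svalP a) => [[]].
      * move=> x y Kx Ky a Aa; case: (svalP a) => [[_ M _] _ _].
        exact: M (Kx a Aa) (Ky a Aa).
      * move=> x Kx a Aa; case: (svalP a) => [[_ _ V] _ _].
        exact: V (Kx a Aa).
    + by apply: closed_bigI => a _; case: (svalP a).
    + apply/seteqP; split => // g _.
      have [||||p Hp] := @compact_inter G T A
         (fun a => sval a `&` [set k | H (k * g^-1)]) hcpt.
      * by exists a0.
      * move=> a _; apply: closedI; first by case: (svalP a).
        exact: closed_rmul.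
      * move=> a _; case: (svalP a) => _ _ E.
        have : setmul H (sval a) g by rewrite E.
        case/setmulP => h [k [Hh ak ->]]; exists k; split => //=.
        by rewrite invgM mulgA mulgV mul1g; exact: HV.
      * move=> a b Aa Ab; case: (totA a b Aa Ab) => /asboolP sub.
          by exists b => // z [bz Hz]; split => //; split => //; exact: sub.
        by exists a => // z [az Hz]; split => //; split => //; exact: sub.
      apply/setmulP; exists (g * p^-1), p; split.
      * have [_ /= Hpg] := Hp a0 Aa0.
        by have := HV _ Hpg; rewrite invgM invgK.
      * by move=> a Aa; case: (Hp a Aa).
      * by rewrite mulgVK.
  by exists (exist _ K pK) => a Aa; apply/asboolP => z Kz; exact: Kz a Aa.
case: t tmax => K [sgK clK HK] tmax.
exists K; split => //; split => //.
apply/seteqP; split; last by move=> _ ->; split; [exact H1| have [] := sgK].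
move=> x [Hx Kx]; apply: contrapT => x1.
have sgA : is_subgroup (H `&` K) by apply: subgroupI.
have [L [sgL clL AL nLx]] := hR _ _ sgA (conj Hx Kx) x1.
have pK' : [/\ is_subgroup (K `&` L), closed (K `&` L) & setmul H (K `&` L) = setT].
  split; [exact: subgroupI | exact: closedI |].
  apply/seteqP; split => // g _.
  have : setmul H K g by rewrite HK.
  case/setmulP => h [k [Hh Kk ->]].
  have : setmul (H `&` K) L k by rewrite AL.
  case/setmulP => a [l [[Ha Ka] Ll Ek]].
  apply/setmulP; exists (h * a), l; split.
  - exact: HM.
  - split => //; have -> : l = a^-1 * k by rewrite Ek mulKg.
    by have [_ M V] := sgK; apply: M => //; exact: V.
  - by rewrite Ek mulgA.
have E := tmax (exist _ (K `&` L) pK') (asboolT (@subIsetl _ K L)).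
have /= E' := congr1 sval E.
have : (K `&` L) x by rewrite E'.
by case.
Qed.

Lemma setmul_normal_l (A N : set G) : is_subgroup A -> is_normal_subgroup N ->
  is_subgroup (setmul A N).
Proof.
case=> A1 AM AV [[N1 NM NV] nN]; split.
- by apply/setmulP; exists 1, 1; rewrite mulg1.
- move=> _ _ /setmulP[a [n [Aa Nn ->]]] /setmulP[a' [n' [Aa' Nn' ->]]].
  apply/setmulP; exists (a * a'), (a'^-1 * n * a' * n'); split; [exact: AM| |].
    by apply: NM => //; exact: nN.
  by rewrite !mulgA mulgK.
- move=> _ /setmulP[a [n [Aa Nn ->]]].
  apply/setmulP; exists a^-1, (a * n^-1 * a^-1); split; [exact: AV| |].
    by have := nN a^-1 _ (NV _ Nn); rewrite invgK.
  by rewrite invgM !mulgA mulVg mul1g.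
Qed.

Lemma setmul_normal_r (N Y : set G) : is_normal_subgroup N -> is_subgroup Y ->
  is_subgroup (setmul N Y).
Proof.
case=> [[N1 NM NV] nN] [Y1 YM YV]; split.
- by apply/setmulP; exists 1, 1; rewrite mulg1.
- move=> _ _ /setmulP[n [y [Nn Yy ->]]] /setmulP[n' [y' [Nn' Yy' ->]]].
  apply/setmulP; exists (n * (y * n' * y^-1)), (y * y'); split; [|exact: YM|].
    by apply: NM => //; have := nN y^-1 _ Nn'; rewrite invgK.
  by rewrite !mulgA mulgVK.
- move=> _ /setmulP[n [y [Nn Yy ->]]].
  apply/setmulP; exists (y^-1 * n^-1 * y), y^-1; split; [| exact: YV|].
    by apply: nN; exact: NV.
  by rewrite invgM mulgK.
Qed.

Lemma iii_R : (forall H : set G, open_subgroup H ->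
  exists K : set G, perm_complement H K) -> Rprop.
Proof.
move=> h3 A x sgA Ax x1.
have [N [oN nN nNx]] := separate x1.
have [[N1 NM NV] _] := nN.
have [A1 AM AV] := sgA.
have sgB := setmul_normal_l sgA nN.
have NB : N `<=` setmul A N.
  by move=> n Nn; apply/setmulP; exists 1, n; rewrite mul1g.
have AB : A `<=` setmul A N.
  by move=> a Aa; apply/setmulP; exists a, 1; rewrite mulg1.
have nN1 : nbhs 1 N by apply: open_nbhs_nbhs.
have oB : open (setmul A N) by apply: subgroup_nbhs_open => //; exact: filterS nN1.
have [Y [sgY BY BY1]] := h3 _ (conj sgB oB).
have sgL := setmul_normal_r nN sgY.
have [Y1 YM YV] := sgY.
exists (setmul N Y); split => //.
- apply: subgroup_open_closed => //; apply: subgroup_nbhs_open => //.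
  by apply: filterS nN1 => n Nn; apply/setmulP; exists n, 1; rewrite mulg1.
- apply/seteqP; split => // g _.
  have : setmul (setmul A N) Y g by rewrite BY.
  case/setmulP => _ [y [/setmulP[a [n [Aa Nn ->]]] Yy ->]].
  apply/setmulP; exists a, (n * y); split => //; last by rewrite mulgA.
  by apply/setmulP; exists n, y.
- case/setmulP => n [y [Nn Yy Ex]].
  have By : setmul A N y.
    have -> : y = n^-1 * x by rewrite Ex mulKg.
    by have [_ BM BV] := sgB; apply: BM; [apply: BV; exact: NB | exact: AB].
  have : (setmul A N `&` Y) y by [].
  rewrite BY1 => y1; apply: nNx; by rewrite Ex y1 mulg1.
Qed.

Lemma hom1 (Q : finGroupType) (p : G -> Q) :
  (forall x y, p (x * y) = p x * p y) -> p 1 = 1.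
Proof. by move=> hp; apply: (mulgI (p 1)); rewrite -hp !mulg1. Qed.

Lemma homV (Q : finGroupType) (p : G -> Q) :
  (forall x y, p (x * y) = p x * p y) -> forall x, p x^-1 = (p x)^-1.
Proof.
by move=> hp x; apply: (mulgI (p x)); rewrite -hp !mulgV; exact: hom1.
Qed.

Definition img_set (Q : finGroupType) (p : G -> Q) (A : set G) : {set Q} :=
  [set q | `[< exists2 a, A a & p a = q >]].

Lemma img_group_set (Q : finGroupType) (p : G -> Q) (A : set G) :
  (forall x y, p (x * y) = p x * p y) -> is_subgroup A ->
  group_set (img_set p A).
Proof.
move=> hp [A1 AM AV]; apply/group_setP; split.
  by rewrite !inE; exists 1 => //; exact: hom1.
move=> u v; rewrite !inE.
move=> [a Aa <-] [b Ab <-].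
by exists (a * b); [exact: AM | rewrite hp].
Qed.

Lemma quot_step (Q : finGroupType) (p : G -> Q) : C_group Q ->
  (forall x y, p (x * y) = p x * p y) ->
  (forall q, open (p @^-1` [set q])) ->
  forall (A : set G) x, is_subgroup A -> A x -> p x <> 1 ->
  exists L : set G, [/\ is_subgroup L, closed L, setmul A L = setT & ~ L x].
Proof.
move=> CQ hp op A x sgA Ax px1.
have [A1 AM AV] := sgA.
pose B := Group (img_group_set hp sgA).
have [K [BK BK1]] := CQ B.
exists [set g | p g \in K]; split.
- split => /=.
  + by rewrite hom1 // group1.
  + by move=> g h; rewrite /= hp; exact: groupM.
  + by move=> g; rewrite /= homV //; exact: groupVr.
- rewrite -openC openE => g nKg; rewrite /interior.
  have : nbhs g (p @^-1` [set p g]) by apply: open_nbhs_nbhs; split.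
  by apply: filterS => y /= ->.
- apply/seteqP; split => // g _.
  have /mulsgP[b k Bb Kk pg] : p g \in (B * K)%g by rewrite BK inE.
  move: Bb; rewrite inE => /asboolP[a Aa pa].
  apply/setmulP; exists a, (a^-1 * g); split => //; last by rewrite mulKVg.
  by rewrite /= hp homV // pa pg mulKg.
- move=> /= Kpx.
  have : p x \in (B :&: K)%g.
    by rewrite inE Kpx andbT inE; apply/asboolP; exists x.
  by rewrite BK1 inE => /eqP.
Qed.

Lemma vi_R : inverse_limit_of_finite_C_groups G -> Rprop.
Proof.
case=> I [le [Q [phi [pi [_ CQ _ [pi_hom pi_open pi_compat] [thr _]]]]]].
move=> A x sgA Ax x1.
have [i pix] : exists i, pi i x <> 1.
  apply: contrapT => nex.
  have px : forall i, pi i x = pi i 1.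
    move=> i; rewrite hom1 //; apply: contrapT => ne; apply: nex; by exists i.
  have [g [_ ug]] := thr (fun i => pi i 1) (fun i j ji => pi_compat i j ji 1).
  by apply: x1; rewrite -(ug x px) (ug 1).
exact: quot_step (CQ i) (pi_hom i) (pi_open i) _ _ sgA Ax pix.
Qed.

Lemma coset_cover (N : set G) : open N -> is_normal_subgroup N ->
  exists s : seq G, forall y, exists2 r, r \in s & N (y * r^-1).
Proof.
move=> oN [[N1 NM NV] nN].
apply: contrapT => ncov.
have [||||p Hp] := @compact_inter G (seq G) setT
  (fun s => [set y | forall r, r \in s -> ~ N (y * r^-1)]) hcpt.
- by exists [::].
- move=> s _.
  have -> : [set y | forall r, r \in s -> ~ N (y * r^-1)] =
      \bigcap_(r in [set r | r \in s]) (~` [set y | N (y * r^-1)]).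
    by apply/seteqP; split=> y Hy r; exact: Hy.
  apply: closed_bigI => r _; apply: open_closedC; exact: open_rmul.
- move=> s _; apply: contrapT => ne; apply: ncov; exists s => y.
  apply: contrapT => nr; apply: ne; exists y => r rs Nr; apply: nr; by exists r.
- move=> s t _ _; exists (s ++ t) => // y Hy.
  by split => r rs; apply: Hy; rewrite mem_cat rs ?orbT.
by have := Hp [:: p] I p; rewrite mem_seq1 eqxx mulgV => /(_ isT).
Qed.

Lemma coset_reps (N : set G) : open N -> is_normal_subgroup N ->
  exists n (r : 'I_n -> G), (forall y, exists i, N (y * (r i)^-1)) /\
    (forall i j, N (r i * (r j)^-1) -> i = j).
Proof.
move=> oN nN; have [[N1 NM NV] nNc] := nN.
have [s hs] := coset_cover oN nN.
pose P n := `[< exists r : 'I_n -> G, forall y, exists i, N (y * (r i)^-1) >].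
have exP : exists n, P n.
  exists (size s); apply/asboolP; exists (fun i => nth 1 s i) => y.
  have [r rs Nr] := hs y.
  have ir : index r s < size s by rewrite index_mem.
  by exists (Ordinal ir); rewrite /= nth_index.
case: (ex_minnP exP) => n /asboolP [r hr] nmin.
exists n, r; split => // i j Nij.
case: (eqVneq i j) => // ij; exfalso.
case: n r hr nmin i j Nij ij => [|m] r hr nmin i j; first by case: i.
move=> Nij ij.
suff : P m by move/nmin; rewrite ltnn.
apply/asboolP; exists (fun k => r (lift j k)) => y.
have [i0 Ni0] := hr y.
case: (unliftP j i0) => [k Ek|Ek]; first by exists k; rewrite -Ek.
case: (unliftP j i) => [k Ei|Eij]; last by rewrite Eij eqxx in ij.
exists k; rewrite -Ei.
have -> : y * (r i)^-1 = (y * (r j)^-1) * (r i * (r j)^-1)^-1.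
  by rewrite invgM invgK !mulgA mulgVK.
by rewrite Ek in Ni0; apply: NM => //; exact: NV.
Qed.

Section Quot.
Variables (N : set G) (n : nat) (r : 'I_n -> G).
Hypothesis nN : is_normal_subgroup N.
Hypothesis rcov : forall y, exists i, N (y * (r i)^-1).
Hypothesis rdist : forall i j, N (r i * (r j)^-1) -> i = j.

Definition idx (y : G) : 'I_n := sval (cid (rcov y)).
Lemma idxP y : N (y * (r (idx y))^-1).
Proof. exact: svalP (cid (rcov y)). Qed.

Lemma idx_uniq y i : N (y * (r i)^-1) -> idx y = i.
Proof.
have [[N1 NM NV] _] := nN.
move=> Ni; apply: rdist.
have -> : r (idx y) * (r i)^-1 = (y * (r (idx y))^-1)^-1 * (y * (r i)^-1).
  by rewrite invgM invgK !mulgA mulgVK.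
by apply: NM => //; apply: NV; exact: idxP.
Qed.

Definition sig_ (g : G) (i : 'I_n) : 'I_n := idx (r i * g).

Lemma sig_inj g : injective (sig_ g).
Proof.
have [[N1 NM NV] _] := nN.
move=> i j E; apply: rdist.
have Ni := idxP (r i * g); have Nj := idxP (r j * g).
rewrite /sig_ in E; rewrite E in Ni.
have -> : r i * (r j)^-1 =
    (r i * g * (r (idx (r j * g)))^-1) * (r j * g * (r (idx (r j * g)))^-1)^-1.
  by rewrite !invgM !invgK !mulgA mulgVK mulgK.
by apply: NM => //; exact: NV.
Qed.

Definition pg (g : G) : {perm 'I_n} := perm (@sig_inj g).

Lemma pgM g h : pg (g * h) = pg g * pg h.
Proof.
have [[N1 NM NV] _] := nN.
apply/permP => i; rewrite permM !permE /sig_; apply: idx_uniq.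
have := NM _ _ (idxP (r i * g)) (idxP (r (idx (r i * g)) * h)).
by rewrite !mulgA mulgVK.
Qed.

Lemma pg_ker g : pg g = 1 <-> N g.
Proof.
have [[N1 NM NV] nNc] := nN.
split.
- have [i0 _] := rcov 1.
  move=> /permP /(_ i0); rewrite permE perm1 /sig_ => E.
  have := idxP (r i0 * g); rewrite E => H.
  have := nNc (r i0) _ H.
  by rewrite !mulgA mulVg mul1g mulgVK.
- move=> Ng; apply/permP => i; rewrite permE perm1; apply: idx_uniq.
  by have := nNc (r i)^-1 _ Ng; rewrite invgK.
Qed.

Definition Im : {set {perm 'I_n}} := [set p : {perm 'I_n} | `[< exists g, pg g = p >]]%SET.

Lemma Im_group : group_set Im.
Proof.
apply/group_setP; split; first by rewrite !inE; exists 1; apply/pg_ker; case: nN => [[]].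
move=> u v; rewrite !inE => -[g <-] [h <-]; exists (g * h); exact: pgM.
Qed.

Definition ImG := Group Im_group.

Definition fq (g : G) : subg_of ImG := subg ImG (pg g).

Lemma pg_in g : pg g \in ImG.
Proof. by rewrite !inE; exists g. Qed.

Lemma quot_ok : is_quotient_map fq N.
Proof.
split.
- by move=> x y; rewrite /fq pgM subgM //; exact: pg_in.
- move=> q; have := subgP q; rewrite !inE => -[g Eg].
  by exists g; rewrite /fq Eg sgvalK.
- move=> x; rewrite -pg_ker; split.
    by move=> E; have := congr1 sgval E; rewrite /fq subgK ?pg_in.
  by move=> E; apply: val_inj; rewrite /fq subgK ?pg_in // E.
Qed.
End Quot.

Lemma exists_quotient (N : set G) : open N -> is_normal_subgroup N ->
  exists (Q : finGroupType) (f : G -> Q), is_quotient_map f N.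
Proof.
move=> oN nN; have [n [r [rc rd]]] := coset_reps oN nN.
by exists (subg_of (ImG nN rc rd)), (fq nN rc rd); exact: quot_ok.
Qed.

Lemma iii_v : (forall H : set G, open_subgroup H ->
    exists K : set G, perm_complement H K) ->
  forall NN : set (set G), fundamental_system_open_normal NN ->
    forall N, NN N -> quotient_is_C_group N.
Proof.
move=> h3 NN [hNN _] N NNN.
have [oN nN] := hNN N NNN.
have [[N1 NM NV] nNc] := nN.
have [Q [f [fM fS fK]]] := exists_quotient oN nN.
exists Q, f; split; first by split.
move=> H.
pose Hp := [set g | f g \in H].
have sgHp : is_subgroup Hp.
  split => /=.
  - by rewrite /Hp /= (hom1 fM) group1.
  - by move=> g h; rewrite /Hp /= fM; exact: groupM.
  - by move=> g; rewrite /Hp /= homV //; exact: groupVr.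
have oHp : open Hp.
  apply: subgroup_nbhs_open => //.
  apply: filterS (open_nbhs_nbhs (conj oN N1)) => g Ng.
  by rewrite /Hp /= ((fK g).2 Ng) group1.
have [K [sgK HK HK1]] := h3 _ (conj sgHp oHp).
exists (Group (img_group_set fM sgK)); split.
- apply/setP => q; rewrite [in RHS]inE.
  have [g <-] := fS q.
  have : setmul Hp K g by rewrite HK.
  case/setmulP => h [k [Hh Kk ->]].
  by rewrite fM; apply: mem_mulg => //; rewrite !inE; exists k.
- apply/trivgP/fintype.subsetP => q /setIP [Hq]; rewrite !inE => -[k Kk Ek].
  have : (Hp `&` K) k by split => //; rewrite /Hp /= Ek.
  by rewrite HK1 => k1; rewrite -Ek k1 (hom1 fM).
Qed.

Lemma normalI (A B : set G) : is_normal_subgroup A -> is_normal_subgroup B ->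
  is_normal_subgroup (A `&` B).
Proof.
move=> [sA nA] [sB nB]; split; first exact: subgroupI.
by move=> g x [Ax Bx]; split; [exact: nA | exact: nB].
Qed.

Lemma v_vi : (forall NN : set (set G), fundamental_system_open_normal NN ->
    forall N, NN N -> quotient_is_C_group N) ->
  inverse_limit_of_finite_C_groups G.
Proof.
move=> h5.
pose NNall := [set N : set G | open N /\ is_normal_subgroup N].
have fund : fundamental_system_open_normal NNall.
  split => // U nU; have [N [oN nN NU]] := open_normal_base nU; by exists N.
pose I := {N : set G | open N /\ is_normal_subgroup N}.
have QF : forall i : I, {Q : finGroupType &
    {f : G -> Q | is_quotient_map f (sval i) /\ C_group Q}}.
  move=> i; have := h5 NNall fund (sval i) (svalP i).
  by case/cid => Q /cid [f hf]; exact: existT _ Q (exist _ f hf).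
pose Q (i : I) := projT1 (QF i).
pose pi (i : I) : G -> Q i := sval (projT2 (QF i)).
have piq : forall i, is_quotient_map (pi i) (sval i).
  by move=> i; exact: (svalP (projT2 (QF i))).1.
have piC : forall i, C_group (Q i).
  by move=> i; exact: (svalP (projT2 (QF i))).2.
have secP : forall i (q : Q i), {x : G | pi i x = q}.
  by move=> i q; apply: cid; case: (piq i) => _ s _; exact: s.
pose sec i q := sval (secP i q).
have eqpi : forall i x y, pi i x = pi i y <-> sval i (x^-1 * y).
  move=> i x y; case: (piq i) => hM _ hK; rewrite -hK hM (homV hM).
  split; first by move=> ->; exact: mulVg.
  by move=> E; apply/eqP; rewrite eq_mulVg1 E.
have trans_eq : forall i j x y, sval i `<=` sval j ->
    pi i x = pi i y -> pi j x = pi j y.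
  by move=> i j x y ij /eqpi /ij /eqpi.
have pij : forall i j : I, open (sval i `&` sval j) /\
    is_normal_subgroup (sval i `&` sval j).
  move=> [a [oa na]] [b [ob nb]] /=; split; [exact: openI | exact: normalI].
have pT : open [set: G] /\ is_normal_subgroup [set: G] by split; [exact: openT | do !split].
pose le (i j : I) := sval j `<=` sval i.
pose phi (i j : I) (q : Q i) : Q j := pi j (sec i q).
have fib : forall i q, pi i @^-1` [set q] = [set y | sval i ((sec i q)^-1 * y)].
  move=> i q; apply/seteqP; split => y /=.
    by move=> E; apply/eqpi; rewrite E; exact: svalP (secP i q).
  by move/eqpi; rewrite (svalP (secP i q)).
exists I, le, Q, phi, pi; split.
- split.
  + exact: inhabits (exist _ setT pT).
  + by move=> i.
  + by move=> i j k ij jk; exact: subset_trans jk ij.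
  + move=> [a pa] [b pb] /= ab ba; apply: eq_exist; exact/seteqP.
  + move=> i j; exists (exist _ (sval i `&` sval j) (pij i j)).
    by split; [exact: subIsetl | exact: subIsetr].
- exact: piC.
- split.
  + move=> i j ji x y; rewrite /phi.
    case: (piq j) => hMj _ _; rewrite -hMj; apply: trans_eq ji _.
    case: (piq i) => hMi _ _.
    by rewrite hMi !(svalP (secP i _)).
  + by move=> i x; rewrite /phi; exact: svalP (secP i x).
  + move=> i j k kj ji x; rewrite /phi; apply: trans_eq kj _.
    by rewrite (svalP (secP j _)).
- split.
  + by move=> i; case: (piq i).
  + move=> i q; rewrite fib; apply: open_lmul; exact: (svalP i).1.
  + by move=> i j ji g; rewrite /phi; apply: trans_eq ji _; exact: svalP (secP i _).
- split.
  + move=> x hx.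
    have [||||p Hp] := @compact_inter G I setT (fun i => pi i @^-1` [set x i]) hcpt.
    * by exists (exist _ setT pT).
    * move=> i _; rewrite fib; apply: closed_lmul.
      by apply: subgroup_open_closed; case: (svalP i) => [? []].
    * by move=> i _; exists (sec i (x i)); exact: svalP (secP i _).
    * move=> i j _ _; pose k : I := exist _ (sval i `&` sval j) (pij i j).
      exists k => // y /= Ey.
      split.
      - rewrite -(hx k i) -?Ey /phi; last exact: subIsetl.
        apply: (trans_eq k); first exact: subIsetl.
        by rewrite (svalP (secP _ _)).
      - rewrite -(hx k j) -?Ey /phi; last exact: subIsetr.
        apply: (trans_eq k); first exact: subIsetr.
        by rewrite (svalP (secP _ _)).
    exists p; split; first by move=> i; exact: Hp i Logic.I.
    move=> g' Hg'; apply: contrapT => ne.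
    have n1 : p^-1 * g' <> 1 by move=> E; apply: ne; rewrite -(mulKVg p g') E mulg1.
    have [N [oN nN nNx]] := separate n1.
    apply: nNx; apply: ((eqpi (exist _ N (conj oN nN)) p g').1).
    by rewrite (Hp _ Logic.I) Hg'.
  + move=> U oU g Ug.
    have : nbhs (g * 1) U by rewrite mulg1; apply: open_nbhs_nbhs.
    move/nbhs_lmul/open_normal_base => [N [oN nN NU]].
    exists [set exist _ N (conj oN nN)]; split; first exact: finite_set1.
    move=> h /(_ _ erefl) E.
    have := (eqpi (exist _ N (conj oN nN)) g h).1 (esym E) => /NU /=.
    by rewrite mulKVg.
Qed.

Lemma main_sec :
  [<-> (forall H : set G, closed_subgroup H ->
          exists K : set G, closed K /\ perm_complement H K);
       (forall H : set G, closed_subgroup H ->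
          exists K : set G, perm_complement H K);
       (forall H : set G, open_subgroup H ->
          exists K : set G, perm_complement H K);
       (forall H : set G, open_subgroup H ->
          exists K : set G, closed K /\ perm_complement H K);
       (forall NN : set (set G), fundamental_system_open_normal NN ->
          forall N, NN N -> quotient_is_C_group N);
       inverse_limit_of_finite_C_groups G].
Proof.
tfae.
- by move=> h1 H cH; have [K [_ pK]] := h1 H cH; exists K.
- move=> h2 H [sgH oH]; apply: h2; split => //; exact: subgroup_open_closed.
- move=> h3 H [sgH oH]; apply: (R_to_i (iii_R h3)).
  split => //; exact: subgroup_open_closed.
- move=> h4; apply: iii_v => H oH; have [K [_ pK]] := h4 H oH; by exists K.
- exact: v_vi.
- by move=> h6; exact: R_to_i (vi_R h6).
Qed.
End TG.

Unset Implicit Arguments.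
Local Close Scope group_scope.

Theorem theoremA (G : topGroupType) (hG : profinite G) :
  [<-> (forall H : set G, closed_subgroup H ->
          exists K : set G, closed K /\ perm_complement H K);
       (forall H : set G, closed_subgroup H ->
          exists K : set G, perm_complement H K);
       (forall H : set G, open_subgroup H ->
          exists K : set G, perm_complement H K);
       (forall H : set G, open_subgroup H ->
          exists K : set G, closed K /\ perm_complement H K);
       (forall NN : set (set G), fundamental_system_open_normal NN ->
          forall N, NN N -> quotient_is_C_group N);
       inverse_limit_of_finite_C_groups G].
Proof.
case: hG => hmul hinv hcpt hhaus htd.
by apply: main_sec.
Qed.
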